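(* Let $\Omega\subset\mathbb{R}^N$ be a bounded open set, $T>0$, $Q_T=(0,T)\times\Omega$, $p>1$, $\sigma\ge1$. Let $w\in L^p(0,T;W^{1,p}_0(\Omega))\cap C([0,T];L^\sigma(\Omega))$ with $\|w(0)\|_{L^\sigma(\Omega)}=0$, and suppose there are constants $c_0>0$, $\eta>0$, $m\ge p$ such that for every $0\le t\le T$, $$\sup_{s\in(0,t)}\|w(s)\|_{L^\sigma(\Omega)}^\sigma+\|w\|_{L^p(0,t;W^{1,p}_0(\Omega))}^p\le c_0\sup_{s\in(0,t)}\|w(s)\|_{L^\sigma(\Omega)}^\eta\,\|w\|_{L^p(0,t;W^{1,p}_0(\Omega))}^m.$$ Then $w\equiv0$ in $Q_T$. *)

(* Defs.v *)
From HB Require Import structures.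
From mathcomp Require Import all_boot all_order all_algebra.
From mathcomp Require Import all_classical all_reals all_analysis.
Set Implicit Arguments. Unset Strict Implicit. Unset Printing Implicit Defensive.
Import Order.TTheory GRing.Theory Num.Theory.
Import numFieldNormedType.Exports.
Local Open Scope classical_set_scope.
Local Open Scope ring_scope.

Section Defs.
Variable R : realType.

Fixpoint iint (n : nat) (f : seq R -> \bar R) : \bar R :=
  match n with
  | 0 => f [::]
  | n'.+1 => (\int[@lebesgue_measure R]_x iint n' (fun s => f (x :: s)))%E
  end.

(* integral over R^N w.r.t. N-dimensional Lebesgue measure of a
   nonnegative (extended real valued) function *)
Definition intRN (N : nat) (f : 'rV[R]_N -> \bar R) : \bar R :=
  iint N (fun s => f (\row_i nth 0 s i)).

Definition sintRN (N : nat) (f : 'rV[R]_N -> R) : \bar R :=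
  (intRN (fun x => (Num.max (f x) 0)%:E) - intRN (fun x => (Num.max (- f x) 0)%:E))%E.

Definition BRN (N : nat) := g_sigma_algebraType (@open 'rV[R]_N).

Definition enorm (N : nat) (v : 'rV[R]_N) : R := Num.sqrt (\sum_i v 0 i ^+ 2).

Definition powint (N : nat) (q : R) (O : set 'rV[R]_N) (u : 'rV[R]_N -> R) : \bar R :=
  intRN (fun x => (\1_O x * `|u x| `^ q)%:E).

Definition inL (N : nat) (q : R) (O : set 'rV[R]_N) (u : 'rV[R]_N -> R) : Prop :=
  measurable_fun (O : set (BRN N)) (u : BRN N -> R) /\ (powint q O u < +oo)%E.

Definition Lnorm_O (N : nat) (q : R) (O : set 'rV[R]_N) (u : 'rV[R]_N -> R) : R :=
  fine (powint q O u) `^ q^-1.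

Definition pd (N : nat) (i : 'I_N) (f : 'rV[R]_N -> R) : 'rV[R]_N -> R :=
  fun x => 'D_(delta_mx 0 i) f x.

Fixpoint pds (N : nat) (l : seq 'I_N) (f : 'rV[R]_N -> R) : 'rV[R]_N -> R :=
  match l with [::] => f | i :: l' => pd i (pds l' f) end.

Definition smooth (N : nat) (f : 'rV[R]_N -> R) : Prop :=
  forall l : seq 'I_N, continuous (pds l f) /\
    forall (i : 'I_N) (x : 'rV[R]_N), derivable (pds l f) x (delta_mx 0 i).

Definition testfun (N : nat) (O : set 'rV[R]_N) (phi : 'rV[R]_N -> R) : Prop :=
  smooth phi /\ exists K : set 'rV[R]_N,
    compact K /\ K `<=` O /\ forall x, ~ K x -> phi x = 0.

Definition grad (N : nat) (phi : 'rV[R]_N -> R) : 'rV[R]_N -> 'rV[R]_N :=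
  fun x => \row_i pd i phi x.

Definition weak_grad (N : nat) (O : set 'rV[R]_N) (u : 'rV[R]_N -> R)
    (g : 'rV[R]_N -> 'rV[R]_N) : Prop :=
  forall phi, testfun O phi -> forall i : 'I_N,
    sintRN (fun x => \1_O x * (u x * pd i phi x)) =
    (- sintRN (fun x => \1_O x * (g x 0 i * phi x))%R)%E.

(* u \in W^{1,p}_0(O) with weak gradient g: u in W^{1,p}(O) and u is the
   W^{1,p}-limit of functions of C_c^infty(O) *)
Definition inW10 (N : nat) (p : R) (O : set 'rV[R]_N) (u : 'rV[R]_N -> R)
    (g : 'rV[R]_N -> 'rV[R]_N) : Prop :=
  [/\ inL p O u,
      (forall i, measurable_fun (O : set (BRN N)) ((fun x => g x 0 i) : BRN N -> R)),
      (powint p O (fun x => enorm (g x)) < +oo)%E,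
      weak_grad O u g &
      (exists phik : nat -> 'rV[R]_N -> R, (forall k, testfun O (phik k)) /\
        (fun k => Lnorm_O p O (fun x => phik k x - u x) +
                  Lnorm_O p O (fun x => enorm (grad (phik k) x - g x))) @ \oo --> 0)].

(* int_O |g|^p dx  (p-th power of the W^{1,p}_0 norm ||grad u||_{L^p}) *)
Definition gradpow (N : nat) (p : R) (O : set 'rV[R]_N) (g : 'rV[R]_N -> 'rV[R]_N) : \bar R :=
  powint p O (fun x => enorm (g x)).

(* w \in L^p(0,T; W^{1,p}_0(O)), with (spatial) weak gradient G *)
Definition inLpW10 (N : nat) (O : set 'rV[R]_N) (T p : R)
    (w : R -> 'rV[R]_N -> R) (G : R -> 'rV[R]_N -> 'rV[R]_N) : Prop :=
  [/\ measurable_fun ([set z | 0 < z.1 < T /\ O z.2] : set (R * BRN N)%type)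
        ((fun z => w z.1 z.2) : (R * BRN N)%type -> R),
      (forall i, measurable_fun ([set z | 0 < z.1 < T /\ O z.2] : set (R * BRN N)%type)
        ((fun z => G z.1 z.2 0 i) : (R * BRN N)%type -> R)),
      {ae @lebesgue_measure R, forall s, 0 < s < T -> inW10 p O (w s) (G s)} &
      (\int[@lebesgue_measure R]_(s in [set s : R | (0 < s < T)%R]) gradpow p O (G s) < +oo)%E].

Definition normLpW (N : nat) (O : set 'rV[R]_N) (p : R)
    (G : R -> 'rV[R]_N -> 'rV[R]_N) (t : R) : R :=
  fine (\int[@lebesgue_measure R]_(s in [set s : R | (0 < s < t)%R]) gradpow p O (G s))%E `^ p^-1.

Definition inCL (N : nat) (O : set 'rV[R]_N) (T sigma : R) (w : R -> 'rV[R]_N -> R) : Prop :=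
  (forall t, 0 <= t <= T -> inL sigma O (w t)) /\
  (forall t, 0 <= t <= T -> forall e : R, 0 < e -> exists2 d : R, 0 < d &
     forall s, 0 <= s <= T -> `|s - t| < d ->
       Lnorm_O sigma O (fun x => w s x - w t x) < e).

End Defs.

(* Main.v *)
Require Import Defs.
From HB Require Import structures.
From mathcomp Require Import all_boot all_order all_algebra.
From mathcomp Require Import all_classical all_reals all_analysis.
From mathcomp Require Import measurable_realfun.
From mathcomp Require Import lra.
Import Order.TTheory GRing.Theory Num.Theory.
Import numFieldNormedType.Exports.
Local Open Scope classical_set_scope.
Local Open Scope ring_scope.
Set Implicit Arguments. Unset Strict Implicit. Unset Printing Implicit Defensive.
Section S.
Variable R : realType.
Local Notation BR n := (BRN R n).
Definition rowl n (l : seq R) : 'rV[R]_n := \row_(i < n) nth 0 l i.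
Definition consr n (x : R) (r : 'rV[R]_n) : 'rV[R]_n.+1 :=
  \row_(i < n.+1) (if unlift ord0 i is Some j then r 0 j else x).

Lemma rowl_cons n x l : rowl n.+1 (x :: l) = consr x (rowl n l).
Proof.
apply/rowP => i; rewrite !mxE; case: unliftP => [j ->|->] //=.
by rewrite mxE.
Qed.
Lemma dummy : True. Proof. by [].
Qed.

Lemma BR_meas n : @measurable _ (BR n) = <<s open >>.
Proof. by []. Qed.

Lemma open_BR n (U : set 'rV[R]_n) : open U -> measurable (U : set (BR n)).
Proof. by move=> oU; apply: sub_sigma_algebra. Qed.

Lemma ballRE (c x e : R) : ball c e x <-> `|c - x| < e.
Proof. by rewrite /ball /=. Qed.

Lemma ballmxE n (c x : 'rV[R]_n) e : ball c e x <-> (0 < e /\ forall i j, ball (c i j) e (x i j)).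
Proof. by []. Qed.
Definition rho (m : nat) : R := ((m.+1)%:R)^-1.
Definition ctr n (m : nat) (zs : seq int) : 'rV[R]_n :=
  \row_i ((nth 0 zs i)%:~R / (m.+1)%:R).

Arguments ctr {n}.
Lemma rho_gt0 m : 0 < rho m.
Proof. by rewrite /rho invr_gt0 ltr0Sn. Qed.

Lemma ball_consr n (c : 'rV[R]_n.+1) e x r :
  ball c e (consr x r) <-> ball (c 0 0) e x /\ ball (\row_j c 0 (lift ord0 j)) e r.
Proof.
split.
- move=> /ballmxE [e0 H]; split.
    by have := H 0 0; rewrite mxE unlift_none.
  apply/ballmxE; split => // i j; rewrite mxE (ord1 i).
  by have := H 0 (lift ord0 j); rewrite mxE liftK.
- move=> [H1 /ballmxE [e0 H2]]; apply/ballmxE; split => // i j.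
  rewrite mxE (ord1 i); case: unliftP => [k ->|->] //.
  by have := H2 0 k; rewrite mxE.
Qed.

Lemma approx_ball n (v : 'rV[R]_n) (m : nat) :
  ball (ctr m [seq Num.floor (v 0 i * (m.+1)%:R) | i <- enum 'I_n]) (rho m) v.
Proof.
apply/ballmxE; split; first exact: rho_gt0.
move=> i j; rewrite (ord1 i) mxE ballRE.
rewrite (nth_map j) ?size_enum_ord // nth_ord_enum.
set M := (m.+1)%:R : R; set y := v 0 j.
have M0 : 0 < M by rewrite ltr0Sn.
have [h1 h2] : (Num.floor (y * M))%:~R <= y * M /\ y * M < (Num.floor (y * M) + 1)%:~R.
  by split; [exact: floor_le | exact: floorD1_gt].
rewrite ler0_norm; last first.
  by rewrite subr_le0 ler_pdivrMr.
rewrite opprB /rho ltrBlDl.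
have -> : (Num.floor (y * M))%:~R / M + M^-1 = (Num.floor (y * M) + 1)%:~R / M.
  by rewrite intrD mulrDl mul1r.
by rewrite ltr_pdivlMr.
Qed.
Lemma consr_meas n :
  measurable_fun setT (fun p : measurableTypeR R * BR n => (consr p.1 p.2 : BR n.+1)).
Proof.

apply: (@measurability _ _ (measurableTypeR R * BR n)%type (BR n.+1) setT _ open (BR_meas n.+1)).
move=> _ [U oU <-]; rewrite setTI.
set F := (fun p : measurableTypeR R * BR n => consr p.1 p.2).
pose E (k : nat) : set (measurableTypeR R * BR n) :=
  if @unpickle (nat * seq int)%type k is Some mz then
    [set p | ball (@ctr n.+1 mz.1 mz.2) (rho mz.1) `<=` U /\
             ball (@ctr n.+1 mz.1 mz.2) (rho mz.1) (F p)]
  else set0.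
have -> : F @^-1` U = \bigcup_(k in setT) E k.
  apply/seteqP; split.
  - move=> p /= Up.
    have : nbhs (F p) U by move: oU; rewrite openE => /(_ _ Up).
    move=> /nbhs_ballP [e e0 He].
    have e20 : 0 < e / 2 by rewrite divr_gt0.
    pose m := Num.bound (e / 2)^-1.
    have hm : rho m < e / 2.
      rewrite /rho -[X in _ < X]invrK ltf_pV2 ?posrE ?invr_gt0 ?ltr0Sn //.
      apply: lt_le_trans (archi_boundP _) _; first by rewrite invr_ge0 ltW.
      by rewrite ler_nat.
    pose zs := [seq Num.floor (F p 0 i * (m.+1)%:R) | i <- enum 'I_n.+1].
    exists (pickle (m, zs)) => //; rewrite /E pickleK /=.
    have hb := approx_ball (F p) m.
    split => //.
    move=> y hy; apply: He.
    have : ball (F p) (rho m + rho m) y.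
      by apply: ball_triangle hy; apply: ball_sym.
    apply: le_ball.
    by rewrite (splitr e) lerD // ltW.
  - move=> p [k _]; rewrite /E.
    case: (unpickle k) => [[m zs]|] //= [H1 H2].
    exact: H1.
apply: bigcup_measurable => k _; rewrite /E.
case: (unpickle k) => [[m zs]|] //=.
have [H|H] := pselect (ball (@ctr n.+1 m zs) (rho m) `<=` U); last first.
  suff -> : [set p | ball (@ctr n.+1 m zs) (rho m) `<=` U /\
             ball (@ctr n.+1 m zs) (rho m) (F p)] = set0 by [].
  by apply/seteqP; split => // p [].
set c := @ctr n.+1 m zs.
have -> : [set p | ball c (rho m) `<=` U /\ ball c (rho m) (F p)] =
   (ball (c 0 0) (rho m)) `*` (ball (\row_j c 0 (lift ord0 j)) (rho m) : set (BR n)).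
  apply/seteqP; split.
    by move=> p [_ /ball_consr].
  by move=> p /= hp; split => //; apply/ball_consr.
apply: measurableX.
  by apply: measurable_realfun.open_measurable; apply: ball_open.
apply: open_BR; apply: ball_open.
Qed.
Local Open Scope ereal_scope.
Lemma iint_ge0 n (F : seq R -> \bar R) : (forall l, 0 <= F l) -> 0 <= iint n F.
Proof.
elim: n F => [|n IH] F F0 //=.
by apply: integral_ge0 => x _; apply: IH.
Qed.

Lemma iint_meas n : forall d (T : measurableType d) (K : T * BR n -> \bar R),
  measurable_fun setT K -> (forall z, 0 <= K z) ->
  measurable_fun setT (fun t => iint n (fun l => K (t, rowl n l))).
Proof.
elim: n => [|n IH] d T K mK K0 /=.
  apply: measurableT_comp mK _; apply: measurable_fun_pair => //; exact: measurable_cst.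
pose K' := fun q : (T * measurableTypeR R) * BR n => K (q.1.1, consr q.1.2 q.2).
have mK' : measurable_fun setT K'.
  pose g := fun x : (T * measurableTypeR R) * BR n => (x.1.2, x.2).
  have mg : measurable_fun setT g.
    apply: measurable_fun_pair; last exact: measurable_snd.
    exact: (@measurableT_comp _ _ _ ((T * measurableTypeR R) * BR n)%type (T * measurableTypeR R)%type R _ setT _
        (@measurable_snd _ _ T (measurableTypeR R)) (@measurable_fst _ _ (T * measurableTypeR R)%type (BR n))).
  have mc := (@measurableT_comp _ _ _ ((T * measurableTypeR R) * BR n)%type (measurableTypeR R * BR n)%type (BR n.+1) _ setT g
       (@consr_meas n) mg).
  pose h := (fun x : (T * measurableTypeR R) * BR n => (x.1.1, consr x.1.2 x.2)) : (T * measurableTypeR R) * BR n -> (T * BR n.+1)%type.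
  have mh : measurable_fun setT h.
    apply: measurable_fun_pair; last exact: mc.
    exact: (@measurableT_comp _ _ _ ((T * measurableTypeR R) * BR n)%type (T * measurableTypeR R)%type T _ setT _
        (@measurable_fst _ _ T (measurableTypeR R)) (@measurable_fst _ _ (T * measurableTypeR R)%type (BR n))).
  exact: (@measurableT_comp _ _ _ ((T * measurableTypeR R) * BR n)%type (T * BR n.+1)%type (\bar R) _ setT h
       mK mh).
have mH := IH _ _ K' mK' (fun z => K0 _).
set H := (fun t => iint n _) in mH.
have H0 : forall tx, 0 <= H tx by move=> tx; apply: iint_ge0 => l; apply: K0.
have -> : (fun t => \int[@lebesgue_measure R]_x iint n (fun s => K (t, rowl n.+1 (x :: s))))
   = fubini_F (@lebesgue_measure R) H.
  apply/funext => t; rewrite /fubini_F; apply: eq_integral => x _.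
  rewrite /H /K'; congr iint; apply/funext => s /=.
  by rewrite rowl_cons.
exact: (@measurable_fun_fubini_tonelli_F _ _ T (measurableTypeR R) R (@lebesgue_measure R) H mH H0).
Qed.
Lemma consr_x_meas n (x : measurableTypeR R) :
  measurable_fun setT (fun r : BR n => (consr x r : BR n.+1)).
Proof.
exact: (@measurable_fun_pair2 _ _ _ (measurableTypeR R) (BR n) (BR n.+1)
  (fun p : measurableTypeR R * BR n => (consr p.1 p.2 : BR n.+1)) x (@consr_meas n)).
Qed.

Lemma comp_consr_meas n (f : BR n.+1 -> \bar R) : measurable_fun setT f ->
  measurable_fun setT (fun p : measurableTypeR R * BR n => f (consr p.1 p.2)).
Proof.
move=> mf.
exact: (@measurableT_comp _ _ _ (measurableTypeR R * BR n)%type (BR n.+1) (\bar R) f setT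
  (fun p : measurableTypeR R * BR n => (consr p.1 p.2 : BR n.+1)) mf (@consr_meas n)).
Qed.

Lemma compx_consr_meas n (f : BR n.+1 -> \bar R) x : measurable_fun setT f ->
  measurable_fun setT (fun r : BR n => f (consr x r)).
Proof.
move=> mf.
exact: (@measurableT_comp _ _ _ (BR n) (BR n.+1) (\bar R) f setT
  (fun r : BR n => (consr x r : BR n.+1)) mf (@consr_x_meas n x)).
Qed.

Lemma iintD n : forall (f g : BR n -> \bar R),
  measurable_fun setT f -> measurable_fun setT g ->
  (forall x, 0 <= f x) -> (forall x, 0 <= g x) ->
  iint n (fun l => f (rowl n l) + g (rowl n l)) =
  iint n (fun l => f (rowl n l)) + iint n (fun l => g (rowl n l)).
Proof.
elim: n => [|n IH] f g mf mg f0 g0 //=.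
transitivity (\int[@lebesgue_measure R]_x
   (iint n (fun s => f (consr x (rowl n s))) + iint n (fun s => g (consr x (rowl n s))))).
  apply: eq_integral => x _; rewrite -(IH (fun r => f (consr x r)) (fun r => g (consr x r))) //.
  - by congr iint; apply/funext => s; rewrite rowl_cons.
  - exact: compx_consr_meas.
  - exact: compx_consr_meas.
rewrite ge0_integralD //.
- by congr (_ + _); apply: eq_integral => x _; congr iint; apply/funext => s;
    rewrite rowl_cons.
- by move=> x _; apply: iint_ge0.
- exact: (@iint_meas n _ (measurableTypeR R) (fun p => f (consr p.1 p.2))
    (comp_consr_meas mf) (fun z => f0 _)).
- by move=> x _; apply: iint_ge0.
- exact: (@iint_meas n _ (measurableTypeR R) (fun p => g (consr p.1 p.2))
    (comp_consr_meas mg) (fun z => g0 _)).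
Qed.

Lemma iintZ n (k : R) : (0 <= k)%R -> forall (f : BR n -> \bar R),
  measurable_fun setT f -> (forall x, 0 <= f x) ->
  iint n (fun l => k%:E * f (rowl n l)) = k%:E * iint n (fun l => f (rowl n l)).
Proof.
move=> k0; elim: n => [|n IH] f mf f0 //=.
transitivity (\int[@lebesgue_measure R]_x
   (k%:E * iint n (fun s => f (consr x (rowl n s))))).
  apply: eq_integral => x _; rewrite -(IH (fun r => f (consr x r))) //.
  - by congr iint; apply/funext => s; rewrite rowl_cons.
  - exact: compx_consr_meas.
rewrite ge0_integralZl_EFin //.
- by congr (_ * _); apply: eq_integral => x _; congr iint; apply/funext => s;
    rewrite rowl_cons.
- by move=> x _; apply: iint_ge0.
- exact: (@iint_meas n _ (measurableTypeR R) (fun p => f (consr p.1 p.2))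
    (comp_consr_meas mf) (fun z => f0 _)).
Qed.

Lemma le_integral_nm d (T : measurableType d) (mu : {measure set T -> \bar R})
  (D : set T) (f g : T -> \bar R) :
  (forall x, 0 <= f x) -> (forall x, f x <= g x) ->
  \int[mu]_(x in D) f x <= \int[mu]_(x in D) g x.
Proof.
move=> f0 fg.
have g0 x : 0 <= g x by apply: le_trans (fg x).
rewrite !ge0_integralE //.
apply: ge_ereal_sup => _ [h hle <-]; apply: ereal_sup_ubound => /=; exists h => // x.
apply: le_trans (hle x) _; rewrite /patch; case: ifP => //.
Qed.

Lemma le_integral_dom d (T : measurableType d) (mu : {measure set T -> \bar R})
  (D1 D2 : set T) (f : T -> \bar R) :
  (forall x, 0 <= f x) -> D1 `<=` D2 ->
  \int[mu]_(x in D1) f x <= \int[mu]_(x in D2) f x.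
Proof.
move=> f0 D12.
rewrite !ge0_integralE //.
apply: ge_ereal_sup => _ [h hle <-]; apply: ereal_sup_ubound => /=; exists h => // x.
apply: le_trans (hle x) _; rewrite /patch; case: ifPn => [/set_mem xD1|_].
  by rewrite (mem_set (D12 _ xD1)).
by case: ifP.
Qed.

Lemma iint_le n (F G : seq R -> \bar R) : (forall l, 0 <= F l) -> (forall l, F l <= G l) ->
  iint n F <= iint n G.
Proof.
elim: n F G => [|n IH] F G F0 FG //=.
apply: le_integral_nm => x; first by apply: iint_ge0.
by apply: IH.
Qed.
Local Close Scope ereal_scope.

Lemma powR_sum_le (u a v q : R) : 0 <= q -> 0 <= u -> 0 <= a -> 0 <= v -> u <= a + v ->
  u `^ q <= 2 `^ q * (a `^ q + v `^ q).
Proof.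
move=> q0 u0 a0 v0 uav.
have hm : a + v <= 2 * Num.max a v.
  by rewrite mulr2n mulrDl mul1r lerD // ?le_max ?lexx ?orbT.
have m0 : 0 <= Num.max a v by rewrite le_max a0.
apply: le_trans (_ : (2 * Num.max a v) `^ q <= _).
  apply: ge0_ler_powR => //; rewrite ?nnegrE //.
    by rewrite mulr_ge0.
  exact: le_trans uav hm.
rewrite powRM //; apply: ler_wpM2l; first exact: powR_ge0.
case: (leP a v) => [av|va].
  by rewrite lerDr powR_ge0.
by rewrite lerDl powR_ge0.
Qed.

Local Open Scope ereal_scope.

Lemma integrand_meas N (q : R) (O : set 'rV[R]_N) (u : 'rV[R]_N -> R) :
  open O -> measurable_fun (O : set (BR N)) (u : BR N -> R) ->
  measurable_fun (setT : set (BR N)) (fun x => (\1_O x * `|u x| `^ q)%:E).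
Proof.
move=> oO mu; apply/measurable_EFinP.
have -> : (fun x : BR N => (\1_O x * `|u x| `^ q)%R) = (fun x : BR N => (`|u x| `^ q)%R) \_ O.
  apply/funext => x; rewrite /patch indicE; case: (x \in O) => /=.
    by rewrite mul1r.
  by rewrite mul0r.
apply: (measurable_restrictT (fun x : BR N => (`|u x| `^ q)%R) (open_BR oO)).1.
apply: (measurableT_comp (measurable_powR q)).
exact: (measurableT_comp (@normr_measurable R setT)).
Qed.

Lemma integrand_ge0 N (q : R) (O : set 'rV[R]_N) (u : 'rV[R]_N -> R) x :
  0 <= (\1_O x * `|u x| `^ q)%:E.
Proof. by rewrite lee_fin mulr_ge0 ?powR_ge0 // indicE; case: (x \in O). Qed.

Lemma powint_ge0 N (q : R) (O : set 'rV[R]_N) (u : 'rV[R]_N -> R) :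
  0 <= powint q O u.
Proof. by apply: iint_ge0 => l; apply: integrand_ge0. Qed.

Lemma PB N (q : R) (O : set 'rV[R]_N) (u a v : 'rV[R]_N -> R) : open O -> (0 <= q)%R ->
  measurable_fun (O : set (BR N)) (a : BR N -> R) ->
  measurable_fun (O : set (BR N)) (v : BR N -> R) ->
  (forall x, `|u x| <= `|a x| + `|v x|)%R ->
  powint q O u <= (2 `^ q)%:E * (powint q O a + powint q O v).
Proof.
move=> oO q0 ma mv uav.
pose Fa := fun x : BR N => (\1_O x * `|a x| `^ q)%:E.
pose Fv := fun x : BR N => (\1_O x * `|v x| `^ q)%:E.
have mFa : measurable_fun setT Fa by exact: integrand_meas.
have mFv : measurable_fun setT Fv by exact: integrand_meas.
have := @iintZ N (2 `^ q) (powR_ge0 _ _) (fun x => Fa x + Fv x)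
  (emeasurable_funD mFa mFv) (fun x => adde_ge0 (integrand_ge0 _ _ _ _) (integrand_ge0 _ _ _ _)).
rewrite (@iintD N Fa Fv mFa mFv (fun x => integrand_ge0 _ _ _ _) (fun x => integrand_ge0 _ _ _ _)).
move=> <-.
apply: iint_le => l; first exact: integrand_ge0.
rewrite /Fa /Fv -EFinD -EFinM lee_fin !indicE.
case: (_ \in O) => /=; last by rewrite !mul0r addr0 mulr0.
rewrite !mul1r; apply: powR_sum_le => //.
Qed.

Lemma LB N (q : R) (O : set 'rV[R]_N) (u a v : 'rV[R]_N -> R) : open O -> (0 < q)%R ->
  measurable_fun (O : set (BR N)) (a : BR N -> R) ->
  measurable_fun (O : set (BR N)) (v : BR N -> R) ->
  powint q O a < +oo -> powint q O v = 0 ->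
  (forall x, `|u x| <= `|a x| + `|v x|)%R ->
  (Lnorm_O q O u <= 2 * Lnorm_O q O a)%R.
Proof.
move=> oO q0 ma mv afin v0 uav.
have := PB oO (ltW q0) ma mv uav; rewrite v0 adde0 => hle.
have a0 := powint_ge0 q O a.
have u0 := powint_ge0 q O u.
have afn : powint q O a \is a fin_num by rewrite ge0_fin_numE.
have ufin : powint q O u < +oo.
  by apply: le_lt_trans hle _; rewrite -(fineK afn) -EFinM ltry.
have ufn : powint q O u \is a fin_num by rewrite ge0_fin_numE.
have hf : (fine (powint q O u) <= 2 `^ q * fine (powint q O a))%R.
  by rewrite -lee_fin EFinM !fineK.
rewrite /Lnorm_O.
have hq : (0 <= q^-1)%R by rewrite invr_ge0 ltW.
apply: le_trans (_ : ((2 `^ q * fine (powint q O a)) `^ q^-1 <= _)%R).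
  apply: (ge0_ler_powR hq) => //; rewrite nnegrE ?fine_ge0 //.
  by rewrite mulr_ge0 ?powR_ge0 ?fine_ge0.
rewrite powRM ?powR_ge0 ?fine_ge0 // -powRrM mulfV ?gt_eqF // powRr1 //.
Qed.
End S.

Lemma z_zero (R : realType) (Y B z Z c0 m p : R) : 0 < c0 -> 1 < p -> p <= m ->
  0 <= z -> z <= Z -> 0 <= Y -> B <= (c0 * (Z `^ (m - p) + 1) * 2)^-1 ->
  Y + z `^ p <= c0 * B * z `^ m -> z = 0.
Proof.
move=> c00 p1 pm z0 zZ Y0 HB H.
have p0 : 0 < p by apply: lt_trans p1.
set W := Z `^ (m - p).
have W0 : 0 <= W by apply: powR_ge0.
pose kap := c0 * (W + 1) * 2.
have kap0 : 0 < kap by rewrite /kap !mulr_gt0 // ltr_wpDl.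
apply/eqP; rewrite eq_le z0 andbT leNgt; apply/negP => zpos.
have zm : z `^ m = z `^ (m - p) * z `^ p.
  have hD := @powRD R z (m - p) p; rewrite subrK in hD.
  by rewrite hD //; apply/implyP => _; rewrite (gt_eqF zpos).
have zp0 : 0 < z `^ p by apply: powR_gt0.
have h1 : 1 * z `^ p <= c0 * kap^-1 * z `^ (m - p) * z `^ p.
  rewrite mul1r; apply: le_trans (_ : z `^ p <= Y + z `^ p) _.
    by rewrite lerDr.
  apply: le_trans H _; rewrite zm !mulrA.
  apply: ler_wpM2r; first exact: powR_ge0.
  apply: ler_wpM2r; first exact: powR_ge0.
  by apply: ler_wpM2l; [exact: ltW|].
rewrite ler_pM2r // in h1.
have h3 : z `^ (m - p) <= W.
  have mp0 : 0 <= m - p by rewrite subr_ge0.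
  have Z0 : 0 <= Z by apply: le_trans zZ.
  by apply: (ge0_ler_powR mp0); rewrite ?nnegrE.
have h4 : c0 * kap^-1 * W < 1.
  rewrite mulrAC ltr_pdivrMr // mul1r /kap -mulrA ltr_pM2l //.
  lra.
have h5 : c0 * kap^-1 * z `^ (m - p) <= c0 * kap^-1 * W.
  by apply: ler_wpM2l => //; rewrite mulr_ge0 ?invr_ge0 ?ltW.
have := le_lt_trans h1 (le_lt_trans h5 h4).
by rewrite ltxx.
Qed.

Lemma tri2 (R : realType) (u v : R) : `|u| <= `|u - v| + `|v|.
Proof. by rewrite -{1}(subrK v u) ler_normD. Qed.

Lemma tri1 (R : realType) (u v : R) : `|u| <= `|v - u| + `|v|.
Proof. by rewrite distrC tri2. Qed.

Theorem lemma3p3 (R : realType) (N : nat) (O : set 'rV[R]_N)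
  (T p sigma c0 eta m : R)
  (w : R -> 'rV[R]_N -> R) (G : R -> 'rV[R]_N -> 'rV[R]_N) :
  (0 < N)%N -> open O -> bounded_set O ->
  0 < T -> 1 < p -> 1 <= sigma ->
  inLpW10 O T p w G -> inCL O T sigma w ->
  Lnorm_O sigma O (w 0) = 0 ->
  0 < c0 -> 0 < eta -> p <= m ->
  (forall t, 0 <= t <= T ->
     sup [set Lnorm_O sigma O (w s) `^ sigma | s in [set s | 0 < s < t]]
       + normLpW O p G t `^ p
     <= c0 * sup [set Lnorm_O sigma O (w s) `^ eta | s in [set s | 0 < s < t]]
          * normLpW O p G t `^ m) ->
  forall t, 0 <= t <= T -> Lnorm_O sigma O (w t) = 0.
Proof.
move=> N0 oO bO T0 p1 s1 hLpW [hCL1 hCL2] hw0 c00 eta0 pm hyp.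
have s0 : 0 < sigma by apply: lt_le_trans s1.
pose L s := Lnorm_O sigma O (w s).
have L0 s : 0 <= L s by apply: powR_ge0.
have Pfin t : 0 <= t <= T -> (powint sigma O (w t) < +oo)%E.
  by move=> ht; case: (hCL1 t ht).
have Pmeas t : 0 <= t <= T -> measurable_fun (O : set (BRN R N)) (w t : BRN R N -> R).
  by move=> ht; case: (hCL1 t ht).
have LP t : 0 <= t <= T -> L t = 0 -> powint sigma O (w t) = 0%E.
  move=> ht /powR_eq0_eq0 h.
  have fn : powint sigma O (w t) \is a fin_num by rewrite ge0_fin_numE ?powint_ge0 ?Pfin.
  by rewrite -(fineK fn) h.
have mdiff s t : 0 <= s <= T -> 0 <= t <= T ->
    measurable_fun (O : set (BRN R N)) ((fun x => w s x - w t x) : BRN R N -> R).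
  by move=> hs ht; apply: measurable_funB; [exact: Pmeas | exact: Pmeas].
have Pdiff s t : 0 <= s <= T -> 0 <= t <= T ->
    (powint sigma O (fun x => (w s x - w t x)%R) < +oo)%E.
  move=> hs ht.
  have := @PB R N sigma O (fun x => w s x - w t x) (w s) (w t) oO (ltW s0)
    (Pmeas s hs) (Pmeas t ht) (fun x => ler_normB _ _).
  move=> /le_lt_trans; apply.
  have fs : powint sigma O (w s) \is a fin_num by rewrite ge0_fin_numE ?powint_ge0 ?Pfin.
  have ft : powint sigma O (w t) \is a fin_num by rewrite ge0_fin_numE ?powint_ge0 ?Pfin.
  by rewrite -(fineK fs) -(fineK ft) -EFinD -EFinM ltry.
have CL t : 0 <= t <= T -> L t = 0 -> forall e, 0 < e ->
    exists2 d, 0 < d & forall s, 0 <= s <= T -> `|s - t| < d -> L s <= e.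
  move=> ht Lt e e0.
  have e20 : 0 < e / 2 by rewrite divr_gt0.
  have [d d0 hd] := hCL2 t ht (e / 2) e20.
  exists d => // s hs hst.
  have hlt := hd s hs hst.
  have := @LB R N sigma O (w s) (fun x => w s x - w t x) (w t) oO s0 (mdiff s t hs ht)
    (Pmeas t ht) (Pdiff s t hs ht) (LP t ht Lt) _.
  move=> /(_ _) h.
  apply: le_trans (h _) _.
    by move=> x; rewrite -{1}(subrK (w t x) (w s x)) ler_normD.
  by rewrite mulrC -ler_pdivlMr // ltW.
pose A := [set t | 0 <= t <= T /\ forall s, 0 <= s <= t -> L s = 0].
have A0 : A 0.
  split; first by rewrite lexx ltW.
  move=> s /andP[s0' s0''].
  have -> : s = 0 by apply/eqP; rewrite eq_le s0'' s0'.
  exact: hw0.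
have Aub : ubound A T by move=> t [/andP[_ ->]].
have hasA : has_sup A by split; [exists 0 | exists T].
pose ts := sup A.
have ts0 : 0 <= ts by apply: (ub_le_sup hasA.2).
have tsT : ts <= T by apply: ge_sup; [exists 0 | exact: Aub].
have hts : 0 <= ts <= T by rewrite ts0 tsT.
have C1 s : 0 <= s < ts -> L s = 0.
  move=> /andP[s0' sts].
  have [y [/andP[_ yT] hy] sy] := sup_gt (ex_intro _ 0 A0) sts.
  by apply: hy; rewrite s0' ltW.
have C2 : L ts = 0.
  have [->|tsn0] := eqVneq ts 0; first exact: hw0.
  have tspos : 0 < ts by rewrite lt0r tsn0 ts0.
  apply/eqP; rewrite eq_le L0 andbT leNgt; apply/negP => Lpos.
  have L4 : 0 < L ts / 4 by rewrite divr_gt0.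
  have [d d0 hd] := hCL2 ts hts (L ts / 4) L4.
  pose s := Num.max 0 (ts - d / 2).
  have sge0 : 0 <= s by rewrite le_max lexx.
  have sts : s < ts by rewrite gt_max tspos ltrBlDr ltrDl divr_gt0.
  have hs : 0 <= s <= T by rewrite sge0 (ltW (lt_le_trans sts tsT)).
  have hsd : `|s - ts| < d.
    rewrite ltr0_norm; last by rewrite subr_lt0.
    rewrite opprB ltrBlDl.
    apply: le_lt_trans (_ : ts <= s + d / 2) _.
      by rewrite -lerBlDr le_max lexx orbT.
    by rewrite ltrD2l ltr_pdivrMr // ltr_pMr // ltr1n.
  have Ls : L s = 0 by apply: C1; rewrite sge0 sts.
  have := @LB R N sigma O (w ts) (fun x => w s x - w ts x) (w s) oO s0 (mdiff s ts hs hts)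
    (Pmeas s hs) (Pdiff s ts hs hts) (LP s hs Ls) (fun x => tri1 _ _).
  move=> h; have := hd s hs hsd => h2.
  have : L ts < L ts.
    apply: le_lt_trans h _.
    have h3 : 2 * Lnorm_O sigma O (fun x => w s x - w ts x) < 2 * (L ts / 4).
      by rewrite ltr_pM2l.
    apply: lt_le_trans h3 _.
    by rewrite mulrA ler_pdivrMr // [X in _ <= X]mulrC ler_pM2r // ler_nat.
  by rewrite ltxx.
have Ats : A ts.
  split; first exact: hts.
  move=> s /andP[s0' sts].
  have [slt|->] : s < ts \/ s = ts.
    by move: sts; rewrite le_eqVlt => /orP[/eqP ->|]; [right|left].
    by apply: C1; rewrite s0' slt.
  exact: C2.
have tsT' : ts = T.
  apply/eqP; rewrite eq_le tsT andTb leNgt; apply/negP => tsltT.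
  pose Z := normLpW O p G T.
  have Z0 : 0 <= Z by apply: powR_ge0.
  pose kap := c0 * (Z `^ (m - p) + 1) * 2.
  have kap0 : 0 < kap.
    by rewrite /kap !mulr_gt0 // ltr_wpDl ?powR_ge0.
  pose e := kap^-1 `^ eta^-1.
  have e0 : 0 < e by apply: powR_gt0; rewrite invr_gt0.
  have ee : e `^ eta = kap^-1.
    by rewrite /e -powRrM mulVf ?gt_eqF // powRr1 // invr_ge0 ltW.
  have [d d0 hd] := CL ts hts C2 e e0.
  pose t := Num.min T (ts + d / 2).
  have tT : t <= T by rewrite ge_min lexx.
  have tst : ts < t by rewrite lt_min tsltT ltrDl divr_gt0.
  have t0 : 0 < t by apply: le_lt_trans tst.
  have ht : 0 <= t <= T by rewrite ltW // tT.
  have Lsmall s : 0 < s < t -> L s <= e.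
    move=> /andP[s0' st].
    have [sts|tss] := leP s ts.
      by rewrite (Ats.2 s) ?(ltW e0) // (ltW s0') sts.
    apply: hd; first by rewrite (ltW s0') (ltW (lt_le_trans st tT)).
    rewrite gtr0_norm ?subr_gt0 //.
    apply: lt_le_trans (_ : t - ts <= _); first by rewrite ltrD2r.
    by rewrite lerBlDl ge_min lerD2l ler_pdivrMr // ler_pMr // ler1n orbT.
  pose SY := [set Lnorm_O sigma O (w s) `^ sigma | s in [set s | 0 < s < t]].
  pose SB := [set Lnorm_O sigma O (w s) `^ eta | s in [set s | 0 < s < t]].
  pose z := normLpW O p G t.
  have H : sup SY + z `^ p <= c0 * sup SB * z `^ m := hyp t ht.
  have [hm1 hm2] := @midf_lt R 0 t t0.
  have hmid : 0 < (0 + t) / 2 < t by rewrite hm1 hm2.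
  have SYub : ubound SY (e `^ sigma).
    move=> _ [s hs <-]; apply: (ge0_ler_powR (ltW s0)); rewrite ?nnegrE ?(ltW e0) ?powR_ge0 //.
    exact: Lsmall.
  have HY s : 0 < s < t -> L s `^ sigma <= sup SY.
    by move=> hs; apply: (ub_le_sup (ex_intro _ _ SYub)); exists s.
  have SBne : SB !=set0 by exists (L ((0 + t) / 2) `^ eta); exists ((0 + t) / 2).
  have HB : sup SB <= e `^ eta.
    apply: ge_sup; first exact: SBne.
    move=> _ [s hs <-]; apply: (ge0_ler_powR (ltW eta0)); rewrite ?nnegrE ?(ltW e0) ?powR_ge0 //.
    exact: Lsmall.
  have zZ : z <= Z.
    case: hLpW => _ _ _ hIT.
    have Ige0 (D : set R) : (0 <= \int[@lebesgue_measure R]_(s in D) gradpow p O (G s))%E.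
      by apply: integral_ge0 => s _; apply: powint_ge0.
    rewrite /z /Z /normLpW.
    have pi0 : 0 <= p^-1 by rewrite invr_ge0 ltW // (lt_trans ltr01 p1).
    apply: (ge0_ler_powR pi0); rewrite ?nnegrE ?fine_ge0 ?Ige0 //.
    apply: fine_le.
    - rewrite ge0_fin_numE ?Ige0 //; apply: le_lt_trans hIT.
      apply: le_integral_dom; first by move=> s; apply: powint_ge0.
      by move=> s /= /andP[s0' st]; rewrite s0' (lt_le_trans st tT).
    - by rewrite ge0_fin_numE ?Ige0.
    apply: le_integral_dom; first by move=> s; apply: powint_ge0.
    by move=> s /= /andP[s0' st]; rewrite s0' (lt_le_trans st tT).
  have p0 : 0 < p by apply: lt_trans p1.
  have Y0 : 0 <= sup SY by apply: le_trans _ (HY _ hmid); exact: powR_ge0.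
  have HB' : sup SB <= kap^-1 by rewrite -ee.
  have hz0 : z = 0 := z_zero c00 p1 pm (powR_ge0 _ _) zZ Y0 HB' H.
  have mpos : m != 0 by rewrite gt_eqF // (lt_le_trans p0 pm).
  have zp : z `^ p = 0 by rewrite hz0 powR0 // gt_eqF.
  have zm' : z `^ m = 0 by rewrite hz0 powR0.
  rewrite zp zm' mulr0 addr0 in H.
  have Lz s : 0 < s < t -> L s = 0.
    move=> hs; apply: (@powR_eq0_eq0 _ _ sigma); apply/eqP; rewrite eq_le powR_ge0 andbT.
    exact: le_trans (HY _ hs) H.
  have [tm1 tm2] := @midf_lt R ts t tst.
  have At' : A ((ts + t) / 2).
    split; first by rewrite (ltW (le_lt_trans ts0 tm1)) (ltW (lt_le_trans tm2 tT)).
    move=> s /andP[s0' st'].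
    have [->|sn0] := eqVneq s 0; first exact: hw0.
    apply: Lz; rewrite lt0r sn0 s0' /=.
    exact: le_lt_trans st' tm2.
  have := ub_le_sup hasA.2 At'.
  by rewrite leNgt tm1.
move=> t /andP[t0 tT].
by apply: Ats.2; rewrite t0 tsT' tT.
Qed.
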